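(* Fix an integer $k\ge3$. Let $\beta\in\mathbb C$ satisfy $\beta^{k+1}=\big(1-(\tfrac12)^{1/k}e^{\pi i/k}\big)^{-1}$, let $\alpha=-\beta^{-k}$, and let $p(z)=\frac{(z-\alpha)(z+\beta)^k-1}{z}$ (a polynomial of degree $k$). Then there is $N\in\mathbb N$ such that for every integer $n>N$ and every solution $w\in\mathbb D$ of the equation $$z^2p'(z)=\frac{n+2}{n+1},$$ setting $\lambda=\frac1w+p(w)$, the polynomial $1+z[p(z)-\lambda]$ has at least two zeros (counted with multiplicity) in the open unit disk $\mathbb D$.
   Context: $\mathbb D$ denotes the open unit disk in $\mathbb C$. *)

(* Defs.v *)
From HB Require Import structures.
From mathcomp Require Import all_boot all_order all_algebra.
From mathcomp Require Import all_classical all_reals all_analysis.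
From mathcomp Require Import complex.
Set Implicit Arguments. Unset Strict Implicit. Unset Printing Implicit Defensive.
Import Order.TTheory GRing.Theory Num.Theory.
Local Open Scope ring_scope.

Definition ck (R : realType) (k : nat) : R[i] :=
  let r := powR (2^-1 : R) (k%:R^-1) in
  Complex (r * cos (pi / k%:R)) (r * sin (pi / k%:R)).

Definition alpha_of (R : realType) (k : nat) (beta : R[i]) : R[i] :=
  - (beta ^- k).

(* p(z) = ((z - alpha)(z + beta)^k - 1) / z, as a polynomial
   (the division is exact since the constant term vanishes). *)
Definition p_poly (R : realType) (k : nat) (beta : R[i]) : {poly R[i]} :=
  (('X - (alpha_of k beta)%:P) * ('X + beta%:P) ^+ k - 1) %/ 'X.

(* The polynomial q has at least two zeros in the open unit disk, counted
   with multiplicity: there are a, b in D (possibly equal) such that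
   (X - a)(X - b) divides q. *)
Definition two_zeros_in_disk (R : realType) (q : {poly R[i]}) : Prop :=
  exists a b : R[i], `|a| < 1 /\ `|b| < 1 /\
    (('X - a%:P) * ('X - b%:P) %| q)%R.

(* Main.v *)
Require Import Defs.
From HB Require Import structures.
From mathcomp Require Import all_boot all_order all_algebra.
From mathcomp Require Import all_classical all_reals all_analysis.
From mathcomp Require Import complex.
From mathcomp Require Import ring lra.
Import Order.TTheory GRing.Theory Num.Theory.
Local Open Scope ring_scope.

Lemma cos_pi3 (R : realType) : cos (pi / 3%:R) = 2^-1 :> R.
Proof.
set t := pi / 3%:R.
have h3 : pi = t + t + t by rewrite /t; field.
have c3 : cos (t + t + t) = -1 by rewrite -h3 cospi.
rewrite !cosD !sinD in c3.
have hs := sin2cos2 t.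
have hc : 0 < cos t.
  apply: cos_gt0_pihalf; rewrite /t; have := pi_gt0 R; move=> hp; apply/andP; split; lra.
set c := cos t in c3 hs hc *; set s := sin t in c3 hs *.
have e : (c + 1) * (2 * c - 1) ^+ 2 = 0.
  have -> : (c + 1) * (2 * c - 1) ^+ 2 = 4 * c ^+ 3 - 3 * c + 1 by ring.
  have hs2 : s * s = 1 - c ^+ 2 by rewrite -expr2 hs.
  have h1 : c * c * c - 3 * c * (1 - c ^+ 2) = -1.
    rewrite -hs2 -c3; ring.
  have -> : 4 * c ^+ 3 - 3 * c + 1 = (c * c * c - 3 * c * (1 - c ^+ 2)) + 1 by ring.
  by rewrite h1 addNr.
move/eqP: e; rewrite mulf_eq0 sqrf_eq0 => /orP[]; first by move/eqP => e; lra.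
move/eqP => e; lra.
Qed.

Lemma cos_pik (R : realType) (k : nat) : (3 <= k)%N -> 2^-1 <= cos (pi / k%:R) :> R.
Proof.
move=> hk; rewrite -cos_pi3.
have hp := pi_gt0 R.
have k3 : (3%:R : R) <= k%:R by rewrite ler_nat.
have kp : (0 : R) < k%:R by lra.
have h1 : (pi : R) / k%:R <= pi / 3%:R.
  rewrite ler_pdivrMr // mulrAC ler_pdivlMr ?ltr0n //; nra.
have h0 : 0 <= (pi : R) / k%:R by apply: divr_ge0; lra.
rewrite le_eqVlt; case: eqP => //= ne.
rewrite ltr_cos ?in_itv /= ?h0.
- by rewrite lt_neqAle h1 andbT; apply/eqP => e; apply: ne; rewrite e.
- by rewrite /= ler_pdivrMr //; nra.
- apply/andP; split; first by apply: divr_ge0; lra.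
  by rewrite ler_pdivrMr ?ltr0n //; nra.
Qed.

Lemma norm_1ck (R : realType) (k : nat) : (3 <= k)%N -> `|1 - ck R k| < 1.
Proof.
move=> hk.
set r := powR (2^-1 : R) (k%:R^-1).
have kp : (0 : R) < k%:R by rewrite ltr0n (leq_trans _ hk).
have r0 : 0 < r by apply: powR_gt0; lra.
have r1 : r < 1.
  have := @gt0_ltr_powR R (k%:R^-1) _ (2^-1) 1.
  rewrite powR1 => h; apply: h; rewrite ?invr_gt0 // ?inE /= ?qualifE /=; lra.
have hc := @cos_pik R k hk.
rewrite normc_def ltcE /=; apply/andP; split; first by [].
rewrite -/r; rewrite -[X in _ < X]sqrtr1 ltr_sqrt ?ltr01 //.
have hcs := cos2Dsin2 (pi / k%:R).
set c := cos _ in hc hcs *; set s := sin _ in hcs *.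
have -> : (1 - r * c) ^+ 2 + (0 - r * s) ^+ 2 = 1 - 2 * r * c + r ^+ 2 * (c ^+ 2 + s ^+ 2) by ring.
rewrite hcs; nra.
Qed.

Section NC.
Variable R : realType.
Local Notation C := R[i].
Local Notation nc := (@Normc.normc R).

Lemma ncE (z : C) : `|z| = (nc z)%:C%C.
Proof. by case: z. Qed.

Lemma nc_ge0 (z : C) : 0 <= nc z.
Proof. by case: z => a b /=; apply: sqrtr_ge0. Qed.

Lemma ncM (x y : C) : nc (x * y) = nc x * nc y.
Proof. exact: Normc.normcM. Qed.

Lemma ncV (x : C) : nc (x^-1) = (nc x)^-1.
Proof. exact: Normc.normcV. Qed.

Lemma ncD (x y : C) : nc (x + y) <= nc x + nc y.
Proof. exact: le_normcD. Qed.

Lemma ncN (x : C) : nc (- x) = nc x.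
Proof. exact: normcN. Qed.

Lemma ncX (x : C) n : nc (x ^+ n) = nc x ^+ n.
Proof.
elim: n => [|n IH]; first by rewrite !expr0; exact: Normc.normc1.
by rewrite !exprS ncM IH.
Qed.

Lemma nc0 : nc 0 = 0. Proof. exact: Normc.normc0. Qed.
Lemma nc1 : nc 1 = 1. Proof. exact: Normc.normc1. Qed.

Lemma ncB (x y : C) : nc x - nc y <= nc (x + y).
Proof.
have := ncD (x + y) (- y); rewrite addrK ncN => h; lra.
Qed.

Lemma nc_real (x : R) : nc (x%:C)%C = `|x|.
Proof. by rewrite /Normc.normc /= expr0n /= addr0 sqrtr_sqr. Qed.

Lemma nc_lt1 (z : C) : (`|z| < 1) = (nc z < 1).
Proof. by rewrite ncE ltcE /= eqxx. Qed.

Lemma nc_sum (I : Type) (r : seq I) (F : I -> C) :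
  nc (\sum_(i <- r) F i) <= \sum_(i <- r) nc (F i).
Proof.
elim: r => [|x r IH]; first by rewrite !big_nil nc0.
rewrite !big_cons; apply: le_trans (ncD _ _) _; exact: lerD.
Qed.

Lemma nc_prod (I : Type) (r : seq I) (F : I -> C) :
  nc (\prod_(i <- r) F i) = \prod_(i <- r) nc (F i).
Proof.
elim: r => [|x r IH]; first by rewrite !big_nil nc1.
by rewrite !big_cons ncM IH.
Qed.

Lemma poly_lip (p : {poly C}) z : nc z <= 1 ->
  nc (p.[z] - p.[0]) <= nc z * \sum_(i < size p) nc p`_i.
Proof.
move=> hz; rewrite horner_coef0 horner_coef.
case sp: (size p) => [|m].
  by rewrite big_ord0 nth_default ?sp // subrr nc0 big_ord0 mulr0.
rewrite big_ord_recl /= expr0 mulr1 [p`_0 + _]addrC addrK.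
rewrite big_ord_recl /= mulrDr.
apply: le_trans (nc_sum _ _ _) _.
apply: (@le_trans _ _ (nc z * \sum_(i < m) nc p`_(bump 0 i))); last first.
  by rewrite lerDr; apply: mulr_ge0; apply: nc_ge0.
rewrite mulr_sumr; apply: ler_sum => i _.
rewrite ncM ncX mulrC; apply: ler_wpM2r; first exact: nc_ge0.
rewrite exprS; apply: ler_piMr; first exact: nc_ge0.
by apply: exprn_ile1 => //; apply: nc_ge0.
Qed.

End NC.

Lemma nc_nat (R : realType) n : Normc.normc (n%:R : R[i]) = n%:R.
Proof. by rewrite -(rmorph_nat (real_complex R)) nc_real normr_nat. Qed.

Local Notation nc := (@Normc.normc _).

Lemma t0 (R : rcfType) (H p : {poly R[i]}) (w eps : R[i]) (key : 'X * p = H - 1)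
  (hw0 : w != 0) (hP : w ^+ 2 * p^`().[w] - 1 = eps) :
  let lambda := w^-1 + p.[w] in
  let q := 1 + 'X * (p - lambda%:P) in
  exists r, q = r * ('X - w%:P) /\ r.[w] * w = eps.
Proof.
move=> lambda q.
have hroot : root q w.
  rewrite /root /q !hornerE /lambda.
  rewrite mulrBr mulrDr mulfV //; apply/eqP; ring.
have hdiv : ('X - w%:P) %| q by rewrite dvdp_XsubCl.
set r := q %/ ('X - w%:P).
have hqr : q = r * ('X - w%:P) by rewrite /r divpK.
exists r; split => //.
  have hq' : q^`() = r^`() * ('X - w%:P) + r.
    by rewrite {1}hqr derivM derivXsubC mulr1.
  have := congr1 (horner^~ w) hq'.
  rewrite !hornerE subrr mulr0 add0r => <-.
  rewrite /q derivD derivC add0r derivM derivX mul1r derivB derivC subr0.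
  rewrite !hornerE /lambda -hP.
  rewrite mulrDl mulrBl mulrDl mulVf // expr2.
  ring.
Qed.

Lemma t1 (R : realType) (k : nat) (H r : {poly R[i]}) (w lambda : R[i]) (d D x e : R)
  (hHm : H \is monic) (hsH : size H = k.+2) (k2 : (2 <= k)%N)
  (hqr : H - lambda *: 'X = r * ('X - w%:P))
  (hD : D = d ^+ k) (hd0 : 0 < d) (hx : x = nc w) (hxd : x + d <= 1)
  (hrw' : nc r.[w] < D) :
  exists a b : R[i], `|a| < 1 /\ `|b| < 1 /\
    (('X - a%:P) * ('X - b%:P) %| (H - lambda *: 'X))%R.
Proof.
set q := H - lambda *: 'X in hqr *.
have hsl : (size (- (lambda *: ('X : {poly R[i]}))) < size H)%N.
  rewrite size_polyN hsH; apply: leq_ltn_trans (size_scale_leq _ _) _.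
  by rewrite size_polyX !ltnS (leq_trans _ k2).
have hqm : lead_coef q = 1.
  by rewrite /q lead_coefDl // (monicP hHm).
have hsq : size q = k.+2 by rewrite /q size_polyDl.
have hr0 : r != 0.
  by apply/eqP => hr; move: hsq; rewrite hqr hr mul0r size_poly0.
have hrm : lead_coef r = 1.
  by rewrite -hqm hqr lead_coef_Mmonic ?monicXsubC.
have hsr : size r = k.+1.
  have := hsq; rewrite hqr size_Mmonic ?monicXsubC // size_XsubC addn2 /=.
  by case.
have [rs hrs] := closed_field_poly_normal r.
rewrite hrm scale1r in hrs.
have hsrs : size rs = k.
  by have := hsr; rewrite hrs size_prod_XsubC; case.
case: (boolP (has (fun z => nc (w - z) < d) rs)) => [/hasP [z zin hz] | /hasPn hall]; last first.
  exfalso.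
  have : D <= nc r.[w].
    rewrite hrs horner_prod nc_prod hD -hsrs.
    have -> : d ^+ size rs = \prod_(z <- rs) d.
      by elim: (rs) => [|y t IH]; rewrite ?big_nil ?expr0 // big_cons exprS IH.
    rewrite [X in X <= _]big_seq [X in _ <= X]big_seq.
    apply: ler_prod => y yin; rewrite hornerXsubC (ltW hd0) /=.
    by have := hall y yin; rewrite /= -leNgt.
  lra.
have hz1 : nc z < 1.
  have := @ncD _ w (- (w - z)); rewrite subKr ncN -hx; lra.
have hrz : root r z by rewrite hrs root_prod_XsubC.
exists w, z; split; first by rewrite nc_lt1 -hx; lra.
split; first by rewrite nc_lt1.
rewrite hqr mulrC; apply: dvdp_mul; first by rewrite dvdp_XsubCl.
exact: dvdpp.
Qed.

Lemma size_H (R : rcfType) (a beta : R[i]) k (hk : (2 < k)%N) : size (('X - a%:P) * ('X + beta%:P) ^+ k) = k.+2.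
Proof.
  rewrite size_monicM ?monicXsubC ?expf_neq0 ?monic_neq0 ?monicXaddC //.
  rewrite size_XsubC.
  have := size_exp ('X + beta%:P) k; rewrite size_XaddC mul1n.
  case: (size (('X + beta%:P) ^+ k)) => [|j] /= h; first by move: hk; rewrite -h.
  by rewrite -h.
Qed.

Theorem lemma4p4 (R : realType) (k : nat) (hk : (3 <= k)%N) (beta : R[i])
  (hbeta : beta ^+ k.+1 = (1 - ck R k)^-1) :
  exists N : nat, forall n : nat, (N < n)%N ->
    forall w : R[i], `|w| < 1 ->
      w ^+ 2 * (p_poly k beta)^`().[w] = (n + 2)%:R / (n + 1)%:R ->
      let lambda := w^-1 + (p_poly k beta).[w] in
      two_zeros_in_disk (1 + 'X * (p_poly k beta - lambda%:P)).
Proof.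
have [k' kE] : exists k', k = k'.+1 by exists k.-1; rewrite prednK // (leq_trans _ hk).
set a := alpha_of k beta.
have hck : nc (1 - ck R k) < 1 by rewrite -nc_lt1; exact: norm_1ck.
have ck0 : 1 - ck R k != 0.
  apply/eqP => e.
  have : complex.Re (1 - ck R k) = 0 by rewrite e.
  rewrite /ck /=.
  have kp : (0 : R) < k%:R by rewrite ltr0n kE.
  have r0 : 0 < (2^-1 : R) `^ k%:R^-1 by apply: powR_gt0; lra.
  have r1 : (2^-1 : R) `^ k%:R^-1 < 1.
    have := @gt0_ltr_powR R (k%:R^-1) _ (2^-1) 1.
    rewrite powR1 => h; apply: h; rewrite ?invr_gt0 // ?inE /= ?qualifE /=; lra.
  have := @cos_le1 R (pi / k%:R); nra.
have hb0 : beta != 0.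
  apply/eqP => e; move: hbeta; rewrite e expr0n /= => /esym/eqP.
  by rewrite invr_eq0 (negbTE ck0).
set b := nc beta.
have hb : 1 < b.
  have e1 : b ^+ k.+1 = (nc (1 - ck R k))^-1 by rewrite /b -ncX hbeta ncV.
  have hpos : 0 < nc (1 - ck R k).
    rewrite lt_def nc_ge0 andbT; apply: contra ck0 => /eqP e; apply/eqP; exact: Normc.eq0_normc e.
  have : 1 < b ^+ k.+1 by rewrite e1 invf_gt1.
  rewrite ltNge => h; rewrite ltNge; apply: contra h => hb1.
  apply: exprn_ile1 => //; exact: nc_ge0.
have hab : a * beta ^+ k = -1.
  by rewrite /a /alpha_of mulNr mulVf ?expf_neq0.
set p := p_poly k beta.
set H := ('X - a%:P) * ('X + beta%:P) ^+ k.
have key : 'X * p = H - 1.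
  have hr : root (H - 1) 0.
    by rewrite /root /H !hornerE mulNr hab opprK subrr.
  have hd0 : 'X %| (H - 1).
    by have := hr; rewrite -dvdp_XsubCl polyC0 subr0.
  have pE : p = (H - 1) %/ 'X by [].
  by rewrite pE mulrC divpK.
have hd : p + 'X * p^`() = H^`().
  have := congr1 (@deriv _) key; rewrite derivM derivX mul1r derivB derivC subr0 => ->.
  done.
have hH : H^`() = ('X + beta%:P) ^+ k + ('X - a%:P) * (('X + beta%:P) ^+ k' *+ k).
  rewrite /H derivM derivXsubC mul1r deriv_exp derivD derivX derivC addr0 mul1r kE //.
have hP : forall w : R[i], w ^+ 2 * p^`().[w] - 1 =
    (w + beta) ^+ k' * ((k%:R : R[i]) * (w * w) - (k'%:R : R[i]) * a * w + a * beta).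
  move=> w.
  have e1 := congr1 (horner^~ w) key; rewrite /H !hornerE in e1.
  have e2 := congr1 (horner^~ w) hd; rewrite hH !hornerE hornerMn !hornerE in e2.
  have e3 : w * p^`().[w] = (w + beta) ^+ k + (w - a) * ((w + beta) ^+ k' *+ k) - p.[w].
    by rewrite -e2 addrC addKr.
  transitivity (w * (w * p^`().[w]) - 1); first by rewrite expr2 mulrA.
  rewrite e3 mulrBr e1 kE [(w + beta) ^+ k'.+1]exprS.
  set u := (w + beta) ^+ k'; ring.
set Pp := ('X + beta%:P) ^+ k' * ((k%:R : R[i]) *: 'X^2 - ((k'%:R : R[i]) * a) *: 'X + (a * beta)%:P).
have hPp : forall w, Pp.[w] = (w + beta) ^+ k' * ((k%:R : R[i]) * (w * w) - (k'%:R : R[i]) * a * w + a * beta).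
  move=> w; rewrite /Pp !(hornerM, horner_exp, hornerD, hornerN, hornerZ, hornerXn, hornerX, hornerC) //.
have hPp0 : Pp.[0] = -1.
  rewrite hPp add0r !mulr0 subr0 add0r mulrCA -exprSr -kE.
  exact: hab.
have b0 : 0 < b by lra.
set A := nc a.
have hA0 : 0 <= A by apply: nc_ge0.
have hA : A * b ^+ k = 1.
  rewrite /A /a /alpha_of ncN ncV ncX -/b mulVf //.
  by rewrite expf_neq0 // gt_eqF.
set B := b ^+ k'.
have k'2 : (2 <= k')%N by rewrite -ltnS -kE.
have hB : 1 < B by rewrite /B exprn_egt1 // -lt0n (leq_trans _ k'2).
have hAb : A * b * B = 1 by rewrite -mulrA /B -exprS -kE.
set K := (k'%:R : R).
have hK : 2 <= K by rewrite /K (ler_nat R 2).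
have kK : (k%:R : R) = K + 1 by rewrite kE -natr1.
have hA1 : A < 1.
  have hy : A * (b * B) = 1 by rewrite mulrA.
  have hbB : 1 < b * B by nra.
  move: hy hbB; set y := b * B; move=> hy hbB; nra.
have hAb1 : A * b < 1.
  have hz : 0 <= A * b by nra.
  move: hAb hz; set z := A * b; move=> hAb' hz; nra.
set s := (K * A + A * b) / (K + 1).
have hsK : s * (K + 1) = K * A + A * b by rewrite /s mulfVK // gt_eqF //; lra.
have hs0 : 0 <= s by apply: divr_ge0; nra.
have hs1 : s < 1 by rewrite /s ltr_pdivrMr; nra.
set d := (1 - s) / 2.
set rho := (1 + s) / 2.
have hd0 : 0 < d by rewrite /d; lra.
have hd1 : d <= 1 by rewrite /d; lra.
have hrho : rho + d = 1 by rewrite /rho /d; field.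
have hrd : rho ^+ 2 - s = d ^+ 2 by rewrite /rho /d; field.
set m := (b - 1) ^+ k' * ((K + 1) * d ^+ 2).
have hm : 0 < m.
  apply: mulr_gt0; first by apply: exprn_gt0; lra.
  apply: mulr_gt0; [lra | exact: exprn_gt0].
set M := \sum_(i < size Pp) nc Pp`_i.
have hM : 0 <= M by apply: sumr_ge0 => i _; apply: nc_ge0.
set D := d ^+ k.
have hD0 : 0 < D by apply: exprn_gt0.
have hD1 : D <= 1 by apply: exprn_ile1; lra.
set T := Num.min m (D / (M + 1)).
have hT : 0 < T by rewrite lt_min hm divr_gt0 //; lra.
have hTm : T <= m by rewrite ge_min lexx.
have hTD : T <= D / (M + 1) by rewrite ge_min lexx orbT.
exists (Num.truncn T^-1).
move=> n hn w hw hyp lambda.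
set e := ((n + 1)%:R : R)^-1.
have hn1 : (0 : R) < (n + 1)%:R by rewrite ltr0n addn1.
have he0 : 0 < e by rewrite invr_gt0.
have heT : e < T.
  have h1 := Num.Theory.truncnS_gt T^-1.
  have h2 : ((Num.truncn T^-1).+1%:R : R) <= (n + 1)%:R by rewrite ler_nat addn1 ltnS ltnW.
  have h3 : T^-1 < (n + 1)%:R by lra.
  have h4 : T * T^-1 = 1 by rewrite mulfV // gt_eqF.
  rewrite /e -div1r ltr_pdivrMr //; nra.
set eps := (((n + 1)%:R : R[i])^-1).
have hn1C : ((n + 1)%:R : R[i]) != 0 by rewrite pnatr_eq0 addn1.
have hPw : (w + beta) ^+ k' * ((k%:R : R[i]) * (w * w) - (k'%:R : R[i]) * a * w + a * beta) = eps.
  rewrite -hP hyp /eps.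
  have -> : (n + 2)%N = (n + 1).+1 by rewrite addnS.
  by rewrite mulrSr mulrDl divff // addrAC subrr add0r div1r.
have hne : nc eps = e by rewrite /eps ncV nc_nat.
set x := nc w.
have hx0 : 0 <= x by apply: nc_ge0.
have hx1 : x < 1 by rewrite /x -nc_lt1.
have hxr : x < rho.
  rewrite ltNge; apply/negP => hrx.
  have h1 : b - 1 <= nc (w + beta).
    have h := @ncB _ beta w; rewrite [beta + w]addrC in h; move: h; rewrite -/b -/x; lra.
  have h2 : (b - 1) ^+ k' <= nc (w + beta) ^+ k'.
    by apply: lerXn2r => //; rewrite qualifE /=; [lra | apply: nc_ge0].
  have h3 : (K + 1) * (x * x) - (K * A * x + A * b) <=
      nc ((k%:R : R[i]) * (w * w) - (k'%:R : R[i]) * a * w + a * beta).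
    rewrite -addrA.
    apply: le_trans (ncB _ _ _).
    rewrite !ncM nc_nat kK -/x lerB //.
    apply: le_trans (ncD _ _ _) _.
    by rewrite ncN !ncM nc_nat -/x -/A -/b.
  have h4 : (K + 1) * d ^+ 2 <= (K + 1) * (x * x) - (K * A * x + A * b).
    have hxx : rho * rho <= x * x by nra.
    have hrd' : rho * rho - s = d ^+ 2 by rewrite -hrd expr2.
    have e1 : (K + 1) * d ^+ 2 = (K + 1) * (rho * rho) - (K * A + A * b).
      by rewrite -hrd' -hsK; ring.
    have t1 : 0 <= (K + 1) * (x * x - rho * rho) by apply: mulr_ge0; lra.
    have t2 : 0 <= K * A * (1 - x) by apply: mulr_ge0; [apply: mulr_ge0|]; lra.
    rewrite e1; lra.
  have h5 : m <= nc ((w + beta) ^+ k' * ((k%:R : R[i]) * (w * w) - (k'%:R : R[i]) * a * w + a * beta)).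
    rewrite ncM ncX /m; apply: ler_pM => //.
    - by apply: exprn_ge0; lra.
    - by apply: mulr_ge0; [lra | apply: exprn_ge0; lra].
    - exact: le_trans h4 h3.
  by move: h5; rewrite hPw hne; lra.
have hlow : 1 - e <= x * M.
  have := @poly_lip _ Pp w (ltW hx1).
  rewrite hPp hPw hPp0 opprK -/x -/M (addrC eps 1).
  have := @ncB _ 1 eps; rewrite nc1 hne; lra.
have he1 : e < 1.
  have : D / (M + 1) <= D by rewrite ler_pdivrMr; nra.
  lra.
have hxpos : 0 < x by nra.
have hw0 : w != 0 by apply: contraTneq hxpos => hw0; rewrite /x hw0 nc0 ltxx.
have hE : e * (M + 1) < D.
  have := lt_le_trans heT hTD; rewrite ltr_pdivlMr //; lra.
have hDx : e < D * x.
  have h1 : D * (1 - e) <= D * x * M by rewrite -mulrA; apply: ler_wpM2l => //; lra.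
  have hDe : D * e <= e by apply: ler_piMl; lra.
  have h3 : e * M < D * x * M by lra.
  have hMp : 0 < M.
    rewrite lt_def hM andbT; apply/eqP => hM0; move: h3; rewrite hM0 !mulr0 ltxx.
    by [].
  by rewrite -(ltr_pM2r hMp).
have hHm : H \is monic.
  by rewrite /H monicMl ?monicXsubC // monic_exp // monicXaddC.
have hsH : size H = k.+2.
  exact: size_H.
have hP' : w ^+ 2 * p^`().[w] - 1 = eps by rewrite hP hPw.
have [r [hqr hrw]] := @t0 _ _ _ _ _ key hw0 hP'.
have hrw' : nc r.[w] < D.
  have : nc (r.[w] * w) = e by rewrite hrw hne.
  rewrite ncM -/x => h.
  have : nc r.[w] * x < D * x by rewrite h.
  by rewrite ltr_pM2r.
have hqH : 1 + 'X * (p - lambda%:P) = H - lambda *: 'X.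
  rewrite mulrBr key [_ * lambda%:P]mulrC mul_polyC; move: (lambda *: _) => Z; ring.
rewrite /two_zeros_in_disk hqH.
apply: (@t1 R k H r w lambda d D x e) => //.
- exact: ltnW hk.
- by rewrite -hqH; exact: hqr.
- lra.
Qed.
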